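(* Let $f:M^2\to\mathbb{R}^3$ be a translating soliton with height function $u=\langle f,\operatorname{v}\rangle$. On the open set $M^2\setminus\operatorname{Crit}(u)$ where $\nabla u\neq0$, the vector field $$W=-\frac{\nabla H+H\nabla u}{|\nabla u|^2}=-\frac{\nabla(e^uH)}{e^u|\nabla u|^2}$$ is divergence free, and the Gauss curvature satisfies $K=\langle\nabla H,W\rangle=\operatorname{div}(HW)$.
   Context: A translating soliton is an immersion $f:M^2\to\mathbb{R}^3$ of an oriented surface with unit normal $\xi$ whose scalar mean curvature $H$ (trace of $A(v,w)=-\langle\vec A(v,w),\xi\rangle$, $\vec A$ the second fundamental form) satisfies $H=-\langle\operatorname{v},\xi\rangle$ with $\operatorname{v}=\operatorname{e}_3$. $\nabla$, $\operatorname{div}$ are taken with respect to the induced metric, $K$ is its Gauss curvature, and $\operatorname{Crit}(u)=\{\nabla u=0\}=\{H^2=1\}$. *)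

(* Defs.v *)
(* classical reals.  Local-coordinate differential geometry of
   a parametrized surface f : U (open in R^2) -> R^3. *)
From Stdlib Require Import Reals ClassicalEpsilon.
Open Scope R_scope.

(* indices of surface coordinates (s,t) and of R^3 components *)
Inductive ix := i1 | i2.
Inductive i3 := c1 | c2 | c3.

Definition sum2 (h : ix -> R) : R := h i1 + h i2.
Definition sum3 (h : i3 -> R) : R := h c1 + h c2 + h c3.

(* partial derivatives (value chosen by epsilon; meaningful where they exist) *)
Definition Dx (F : R -> R -> R) (x y : R) : R :=
  epsilon (inhabits 0) (fun l => derivable_pt_lim (fun s => F s y) x l).
Definition Dy (F : R -> R -> R) (x y : R) : R :=
  epsilon (inhabits 0) (fun l => derivable_pt_lim (fun t => F x t) y l).
Definition D (i : ix) (F : R -> R -> R) : R -> R -> R :=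
  match i with i1 => Dx F | i2 => Dy F end.

Fixpoint Dl (l : list ix) (F : R -> R -> R) : R -> R -> R :=
  match l with nil => F | cons i l' => D i (Dl l' F) end.

Definition open2 (U : R -> R -> Prop) : Prop :=
  forall x y, U x y -> exists r, 0 < r /\
    forall x' y', Rabs (x' - x) < r -> Rabs (y' - y) < r -> U x' y'.

Definition continuous2_at (F : R -> R -> R) (x y : R) : Prop :=
  forall eps, 0 < eps -> exists del, 0 < del /\
    forall x' y', Rabs (x' - x) < del -> Rabs (y' - y) < del ->
      Rabs (F x' y' - F x y) < eps.

Definition smooth_on (U : R -> R -> Prop) (F : R -> R -> R) : Prop :=
  forall l x y, U x y ->
    (exists a, derivable_pt_lim (fun s => Dl l F s y) x a) /\
    (exists b, derivable_pt_lim (fun t => Dl l F x t) y b) /\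
    continuous2_at (Dl l F) x y.

Definition surf := i3 -> R -> R -> R.

Definition dot3 (a b : i3 -> R) : R := sum3 (fun k => a k * b k).
Definition cross3 (a b : i3 -> R) (k : i3) : R :=
  match k with
  | c1 => a c2 * b c3 - a c3 * b c2
  | c2 => a c3 * b c1 - a c1 * b c3
  | c3 => a c1 * b c2 - a c2 * b c1
  end.

Definition metric (f : surf) (i j : ix) (x y : R) : R :=
  dot3 (fun k => D i (f k) x y) (fun k => D j (f k) x y).
Definition gdet (f : surf) (x y : R) : R :=
  metric f i1 i1 x y * metric f i2 i2 x y - metric f i1 i2 x y ^ 2.
Definition ginv (f : surf) (i j : ix) (x y : R) : R :=
  match i, j with
  | i1, i1 => metric f i2 i2 x y / gdet f x y
  | i2, i2 => metric f i1 i1 x y / gdet f x y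
  | _, _ => - metric f i1 i2 x y / gdet f x y
  end.

(* immersion: df injective, i.e. f_s x f_t <> 0 *)
Definition normal_raw (f : surf) (k : i3) (x y : R) : R :=
  cross3 (fun m => D i1 (f m) x y) (fun m => D i2 (f m) x y) k.
Definition immersion_on (U : R -> R -> Prop) (f : surf) : Prop :=
  forall x y, U x y -> ~ (forall k, normal_raw f k x y = 0).

(* unit normal xi (orientation induced by the coordinates) *)
Definition unit_normal (f : surf) (k : i3) (x y : R) : R :=
  normal_raw f k x y /
    sqrt (dot3 (fun m => normal_raw f m x y) (fun m => normal_raw f m x y)).

(* scalar second fundamental form A(d_i,d_j) = - < vecA(d_i,d_j), xi >
   = - < f_ij, xi > *)
Definition sff (f : surf) (i j : ix) (x y : R) : R :=
  - dot3 (fun k => D i (D j (f k)) x y) (fun k => unit_normal f k x y).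

Definition mean_curv (f : surf) (x y : R) : R :=
  sum2 (fun i => sum2 (fun j => ginv f i j x y * sff f i j x y)).

(* translating soliton with velocity v = e_3 : H = - < e_3, xi > *)
Definition translating_soliton_on (U : R -> R -> Prop) (f : surf) : Prop :=
  forall x y, U x y -> mean_curv f x y = - unit_normal f c3 x y.

Definition height (f : surf) : R -> R -> R := f c3.

Definition chr (f : surf) (k i j : ix) (x y : R) : R :=
  / 2 * sum2 (fun l => ginv f k l x y *
    (D i (metric f j l) x y + D j (metric f i l) x y - D l (metric f i j) x y)).

(* Riemann tensor: R(d_i,d_j) d_k = R^l_ijk d_l,
   R(X,Y) = nabla_X nabla_Y - nabla_Y nabla_X - nabla_[X,Y] *)
Definition riem (f : surf) (l i j k : ix) (x y : R) : R :=
  D i (chr f l j k) x y - D j (chr f l i k) x y +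
  sum2 (fun m => chr f m j k x y * chr f l i m x y - chr f m i k x y * chr f l j m x y).

Definition gauss_curv (f : surf) (x y : R) : R :=
  sum2 (fun l => metric f i1 l x y * riem f l i1 i2 i2 x y) / gdet f x y.

(* tangent vector fields, in coordinate components X = X^i d_i *)
Definition vfield := ix -> R -> R -> R.

Definition grad (f : surf) (phi : R -> R -> R) : vfield :=
  fun i x y => sum2 (fun j => ginv f i j x y * D j phi x y).
Definition inner (f : surf) (X Y : vfield) (x y : R) : R :=
  sum2 (fun i => sum2 (fun j => metric f i j x y * X i x y * Y j x y)).
Definition div (f : surf) (X : vfield) (x y : R) : R :=
  / sqrt (gdet f x y) *
    sum2 (fun i => D i (fun x' y' => sqrt (gdet f x' y') * X i x' y') x y).
Definition scal (h : R -> R -> R) (X : vfield) : vfield :=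
  fun i x y => h x y * X i x y.

Definition Wfield (f : surf) : vfield :=
  fun i x y =>
    - (grad f (mean_curv f) i x y + mean_curv f x y * grad f (height f) i x y)
    / inner f (grad f (height f)) (grad f (height f)) x y.

(* Main.v *)
Require Import Defs.
From Stdlib Require Import Reals ClassicalEpsilon Lra Psatz FunctionalExtensionality.
From Coquelicot Require Coquelicot.
Open Scope R_scope.

Definition dl (i : ix) (F : R -> R -> R) (x y a : R) : Prop :=
  match i with
  | i1 => derivable_pt_lim (fun s => F s y) x a
  | i2 => derivable_pt_lim (fun t => F x t) y a
  end.

Lemma dl_D i F x y a : dl i F x y a -> D i F x y = a.
Proof.
  destruct i; intro H; [change (Defs.Dx F x y = a); unfold Defs.Dx|change (Defs.Dy F x y = a); unfold Defs.Dy].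
  - pose proof (epsilon_spec (inhabits 0) (fun l => derivable_pt_lim (fun s => F s y) x l) (ex_intro _ a H)) as H1.
    exact (uniqueness_limite _ _ _ _ H1 H).
  - pose proof (epsilon_spec (inhabits 0) (fun l => derivable_pt_lim (fun t => F x t) y l) (ex_intro _ a H)) as H1.
    exact (uniqueness_limite _ _ _ _ H1 H).
Qed.

Lemma dl_ex i F x y : (exists a, dl i F x y a) -> dl i F x y (D i F x y).
Proof. intros [a H]. rewrite (dl_D _ _ _ _ _ H). exact H. Qed.

Lemma dl_eq i F x y a b : dl i F x y a -> a = b -> dl i F x y b.
Proof. intros H ->; exact H. Qed.

Lemma dl_const i c x y : dl i (fun _ _ => c) x y 0.
Proof. destruct i; apply derivable_pt_lim_const. Qed.

Lemma dl_plus i F G x y a b : dl i F x y a -> dl i G x y b ->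
  dl i (fun u v => F u v + G u v) x y (a + b).
Proof. destruct i; simpl; intros H1 H2; exact (derivable_pt_lim_plus _ _ _ _ _ H1 H2). Qed.

Lemma dl_minus i F G x y a b : dl i F x y a -> dl i G x y b ->
  dl i (fun u v => F u v - G u v) x y (a - b).
Proof. destruct i; simpl; intros H1 H2; exact (derivable_pt_lim_minus _ _ _ _ _ H1 H2). Qed.

Lemma dl_mult i F G x y a b : dl i F x y a -> dl i G x y b ->
  dl i (fun u v => F u v * G u v) x y (a * G x y + F x y * b).
Proof. destruct i; simpl; intros H1 H2; exact (derivable_pt_lim_mult _ _ _ _ _ H1 H2). Qed.

Lemma dl_opp i F x y a : dl i F x y a -> dl i (fun u v => - F u v) x y (- a).
Proof. destruct i; simpl; intros H1; exact (derivable_pt_lim_opp _ _ _ H1). Qed.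

Lemma dpl_ext f g x l : (forall s, f s = g s) -> derivable_pt_lim f x l -> derivable_pt_lim g x l.
Proof.
  intros Hfg H eps He. destruct (H eps He) as [d Hd]. exists d. intros h Hh Hhd.
  rewrite <- !Hfg. apply Hd; auto.
Qed.

Lemma dl_fext i F G x y a : (forall u v, F u v = G u v) -> dl i F x y a -> dl i G x y a.
Proof. destruct i; simpl; intros Hfg H; (eapply dpl_ext; [|exact H]); intros; apply Hfg. Qed.

Lemma dl_inv i F x y a : dl i F x y a -> F x y <> 0 ->
  dl i (fun u v => / F u v) x y (- a / (F x y * F x y)).
Proof.
  destruct i; simpl; intros H1 Hn.
  - pose proof (derivable_pt_lim_div (fct_cte 1) (fun s => F s y) x 0 a (derivable_pt_lim_const 1 x) H1 Hn) as H.
    replace (-a/(F x y * F x y)) with ((0 * F x y - a * fct_cte 1 x) / (F x y)²)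
       by (unfold Rsqr, fct_cte; field; auto).
    eapply dpl_ext; [| exact H].
    intros s; unfold div_fct, fct_cte; simpl; unfold Rdiv; ring.
  - pose proof (derivable_pt_lim_div (fct_cte 1) (fun t => F x t) y 0 a (derivable_pt_lim_const 1 y) H1 Hn) as H.
    replace (-a/(F x y * F x y)) with ((0 * F x y - a * fct_cte 1 y) / (F x y)²)
       by (unfold Rsqr, fct_cte; field; auto).
    eapply dpl_ext; [| exact H].
    intros s; unfold div_fct, fct_cte; simpl; unfold Rdiv; ring.
Qed.

Lemma dl_div i F G x y a b : dl i F x y a -> dl i G x y b -> G x y <> 0 ->
  dl i (fun u v => F u v / G u v) x y ((a * G x y - F x y * b) / (G x y * G x y)).
Proof.
  intros H1 H2 Hn. unfold Rdiv.
  eapply dl_eq. { apply (dl_mult i F (fun u v => / G u v)). exact H1. apply dl_inv; [exact H2|exact Hn]. }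
  field; auto.
Qed.

Lemma dl_sqrt i F x y a : dl i F x y a -> 0 < F x y ->
  dl i (fun u v => sqrt (F u v)) x y (a / (2 * sqrt (F x y))).
Proof.
  destruct i; simpl; intros H1 Hp.
  - pose proof (derivable_pt_lim_comp (fun s => F s y) sqrt x a _ H1 (derivable_pt_lim_sqrt _ Hp)) as H.
    eapply dpl_ext; [| replace (a / (2 * sqrt (F x y))) with (/ (2 * sqrt (F x y)) * a) by (unfold Rdiv; ring); exact H].
    intros; reflexivity.
  - pose proof (derivable_pt_lim_comp (fun t => F x t) sqrt y a _ H1 (derivable_pt_lim_sqrt _ Hp)) as H.
    eapply dpl_ext; [| replace (a / (2 * sqrt (F x y))) with (/ (2 * sqrt (F x y)) * a) by (unfold Rdiv; ring); exact H].
    intros; reflexivity.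
Qed.

Lemma dl_exp i F x y a : dl i F x y a ->
  dl i (fun u v => exp (F u v)) x y (exp (F x y) * a).
Proof.
  destruct i; simpl; intros H1.
  - exact (derivable_pt_lim_comp (fun s => F s y) exp x a _ H1 (derivable_pt_lim_exp _)).
  - exact (derivable_pt_lim_comp (fun t => F x t) exp y a _ H1 (derivable_pt_lim_exp _)).
Qed.

Definition near (x y : R) (P : R -> R -> Prop) : Prop :=
  exists r, 0 < r /\ forall x' y', Rabs (x' - x) < r -> Rabs (y' - y) < r -> P x' y'.

Lemma near_and x y P Q : near x y P -> near x y Q -> near x y (fun u v => P u v /\ Q u v).
Proof.
  intros [r1 [H1 P1]] [r2 [H2 P2]]. exists (Rmin r1 r2). split. apply Rmin_pos; auto.
  intros u v Hu Hv. split; [apply P1|apply P2];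
  eapply Rlt_le_trans; eauto; try apply Rmin_l; apply Rmin_r.
Qed.

Lemma near_mono x y (P Q : R -> R -> Prop) : near x y P -> (forall u v, P u v -> Q u v) -> near x y Q.
Proof. intros [r [H1 P1]] HPQ. exists r. split; auto. Qed.

Lemma near_open U x y : open2 U -> U x y -> near x y U.
Proof. intros HU Hxy. exact (HU x y Hxy). Qed.

Lemma dl_ext i F G x y a : near x y (fun u v => F u v = G u v) -> dl i G x y a -> dl i F x y a.
Proof.
  intros [r [Hr Hn]].
  assert (H0 : Rabs 0 < r) by (rewrite Rabs_R0; auto).
  destruct i; simpl; intros H eps He; destruct (H eps He) as [d Hd];
  (assert (Hm : 0 < Rmin d r) by (apply Rmin_pos; [apply cond_pos|auto]));
  exists (mkposreal _ Hm); intros h Hh Hhd; simpl in Hhd;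
  (assert (Hh1 : Rabs h < d) by (apply (Rlt_le_trans _ _ _ Hhd); apply Rmin_l));
  (assert (Hh2 : Rabs h < r) by (apply (Rlt_le_trans _ _ _ Hhd); apply Rmin_r)).
  - assert (E1 : F (x+h) y = G (x+h) y) by (apply Hn; [replace (x + h - x) with h by ring| rewrite Rminus_diag]; auto).
    assert (E2 : F x y = G x y) by (apply Hn; rewrite Rminus_diag; auto).
    rewrite E1, E2. apply Hd; auto.
  - assert (E1 : F x (y+h) = G x (y+h)) by (apply Hn; [rewrite Rminus_diag|replace (y + h - y) with h by ring]; auto).
    assert (E2 : F x y = G x y) by (apply Hn; rewrite Rminus_diag; auto).
    rewrite E1, E2. apply Hd; auto.
Qed.

Lemma D_ext i F G x y a : near x y (fun u v => F u v = G u v) -> dl i G x y a -> D i F x y = a.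
Proof. intros Hn H. apply dl_D. eapply dl_ext; eauto. Qed.

Lemma dl_Dl U F l i x y : smooth_on U F -> U x y -> dl i (Dl l F) x y (D i (Dl l F) x y).
Proof.
  intros HS Hxy. destruct (HS l x y Hxy) as [[a Ha] [[b Hb] _]].
  apply dl_ex. destruct i; [exists a|exists b]; assumption.
Qed.

Lemma dl_F U F i x y : smooth_on U F -> U x y -> dl i F x y (D i F x y).
Proof. intros; apply (dl_Dl U F nil); auto. Qed.
Lemma dl_DF U F i j x y : smooth_on U F -> U x y -> dl i (D j F) x y (D i (D j F) x y).
Proof. intros; apply (dl_Dl U F (j :: nil)); auto. Qed.
Lemma dl_DDF U F i j k x y : smooth_on U F -> U x y -> dl i (D j (D k F)) x y (D i (D j (D k F)) x y).
Proof. intros; apply (dl_Dl U F (j :: k :: nil)); auto. Qed.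

Lemma Dl_app l c F : Dl l (D c F) = Dl (l ++ c :: nil) F.
Proof. induction l; simpl; auto. rewrite IHl; auto. Qed.

Lemma smooth_D U F c : smooth_on U F -> smooth_on U (D c F).
Proof. intros HS l x y H. rewrite Dl_app. apply HS; auto. Qed.


Lemma Derive_of_dpl f x a : derivable_pt_lim f x a -> Coquelicot.Derive.Derive f x = a.
Proof.
  intro H. apply Coquelicot.Derive.is_derive_unique.
  apply (proj2 (Coquelicot.Derive.is_derive_Reals f x a)). exact H.
Qed.

Lemma ex_derive_of_dpl f x a : derivable_pt_lim f x a -> @Coquelicot.Derive.ex_derive Coquelicot.Hierarchy.R_AbsRing Coquelicot.Hierarchy.R_NormedModule f x.
Proof.
  intro H. exists a. apply (proj2 (Coquelicot.Derive.is_derive_Reals f x a)). exact H.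
Qed.

Lemma loc_R (x r : R) (P : R -> Prop) : 0 < r -> (forall z, Rabs (z - x) < r -> P z) ->
  @Coquelicot.Hierarchy.locally Coquelicot.Hierarchy.R_UniformSpace x P.
Proof.
  intros Hr HP. exists (mkposreal r Hr). intros z Hz. apply HP. exact Hz.
Qed.

Section Clairaut.
Variable U : R -> R -> Prop.
Variable F : R -> R -> R.
Hypothesis HU : open2 U.
Hypothesis HS : smooth_on U F.

Lemma bridge1 u v : U u v ->
  Coquelicot.Derive.Derive (fun z => Coquelicot.Derive.Derive (fun t => F z t) v) u = D i1 (D i2 F) u v.
Proof.
  intro Huv. destruct (HU u v Huv) as [r [Hr Hn]].
  rewrite (Coquelicot.Derive.Derive_ext_loc _ (fun z => D i2 F z v)).
  - apply Derive_of_dpl. exact (dl_DF U F i1 i2 u v HS Huv).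
  - apply (loc_R u r); auto. intros z Hz. apply Derive_of_dpl.
    apply (dl_F U F i2 z v HS). apply Hn; auto. rewrite Rminus_diag, Rabs_R0; auto.
Qed.

Lemma bridge2 u v : U u v ->
  Coquelicot.Derive.Derive (fun z => Coquelicot.Derive.Derive (fun t => F t z) u) v = D i2 (D i1 F) u v.
Proof.
  intro Huv. destruct (HU u v Huv) as [r [Hr Hn]].
  rewrite (Coquelicot.Derive.Derive_ext_loc _ (fun z => D i1 F u z)).
  - apply Derive_of_dpl. exact (dl_DF U F i2 i1 u v HS Huv).
  - apply (loc_R v r); auto. intros z Hz. apply Derive_of_dpl.
    apply (dl_F U F i1 u z HS). apply Hn; auto. rewrite Rminus_diag, Rabs_R0; auto.
Qed.

Lemma cont_conv G x y : continuous2_at G x y -> Coquelicot.Continuity.continuity_2d_pt G x y.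
Proof.
  intros H eps. destruct (H eps (cond_pos eps)) as [d [Hd Hdd]].
  exists (mkposreal d Hd). intros u v Hu Hv. apply Hdd; auto.
Qed.

Lemma clairaut x y : U x y -> D i1 (D i2 F) x y = D i2 (D i1 F) x y.
Proof.
  intro Hxy. rewrite <- (bridge1 x y Hxy), <- (bridge2 x y Hxy).
  destruct (HU x y Hxy) as [r [Hr Hn]].
  apply Coquelicot.Derive_2d.Schwarz.
  - exists (mkposreal r Hr). intros u v Hu Hv. simpl in Hu, Hv.
    assert (Huv : U u v) by (apply Hn; auto).
    destruct (HU u v Huv) as [r' [Hr' Hn']].
    split; [|split; [|split]].
    + eapply ex_derive_of_dpl. exact (dl_F U F i1 u v HS Huv).
    + eapply ex_derive_of_dpl. exact (dl_F U F i2 u v HS Huv).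
    + apply (@Coquelicot.Derive.ex_derive_ext_loc Coquelicot.Hierarchy.R_AbsRing Coquelicot.Hierarchy.R_NormedModule (fun z => D i2 F z v)).
      * apply (loc_R u r'); auto. intros z Hz. symmetry. apply Derive_of_dpl.
        apply (dl_F U F i2 z v HS). apply Hn'; auto. rewrite Rminus_diag, Rabs_R0; auto.
      * eapply ex_derive_of_dpl. exact (dl_DF U F i1 i2 u v HS Huv).
    + apply (@Coquelicot.Derive.ex_derive_ext_loc Coquelicot.Hierarchy.R_AbsRing Coquelicot.Hierarchy.R_NormedModule (fun z => D i1 F u z)).
      * apply (loc_R v r'); auto. intros z Hz. symmetry. apply Derive_of_dpl.
        apply (dl_F U F i1 u z HS). apply Hn'; auto. rewrite Rminus_diag, Rabs_R0; auto.
      * eapply ex_derive_of_dpl. exact (dl_DF U F i2 i1 u v HS Huv).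
  - apply (Coquelicot.Continuity.continuity_2d_pt_ext_loc (D i1 (D i2 F))).
    + exists (mkposreal r Hr). intros u v Hu Hv. symmetry. apply bridge1. apply Hn; auto.
    + apply cont_conv. exact (proj2 (proj2 (HS (cons i1 (cons i2 nil)) x y Hxy))).
  - apply (Coquelicot.Continuity.continuity_2d_pt_ext_loc (D i2 (D i1 F))).
    + exists (mkposreal r Hr). intros u v Hu Hv. symmetry. apply bridge2. apply Hn; auto.
    + apply cont_conv. exact (proj2 (proj2 (HS (cons i2 (cons i1 nil)) x y Hxy))).
Qed.
End Clairaut.

Lemma dl_pow2 i F x y a : dl i F x y a -> dl i (fun u v => F u v ^ 2) x y (2 * F x y * a).
Proof.
  intro H. eapply dl_eq. eapply (dl_fext i (fun u v => F u v * F u v)).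
  intros; simpl; ring. apply dl_mult; eauto. ring.
Qed.

Ltac dlstep := first
  [ apply dl_const
  | apply dl_minus | apply dl_plus | apply dl_div | apply dl_inv | apply dl_mult | apply dl_opp | apply dl_pow2
  | apply dl_sqrt | apply dl_exp ].

Section Surf.
Variable U : R -> R -> Prop.
Variable f : surf.
Hypothesis HU : open2 U.
Hypothesis HS : forall k, smooth_on U (f k).

Lemma dlf0 k i x y : U x y -> dl i (f k) x y (D i (f k) x y).
Proof. intros; apply (dl_F U); auto. Qed.
Lemma dlf1 k i j x y : U x y -> dl i (D j (f k)) x y (D i (D j (f k)) x y).
Proof. intros; apply (dl_DF U); auto. Qed.
Lemma dlf2 k i j l x y : U x y -> dl i (D j (D l (f k))) x y (D i (D j (D l (f k))) x y).
Proof. intros; apply (dl_DDF U); auto. Qed.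

Lemma sym2 k x y : U x y -> D i2 (D i1 (f k)) x y = D i1 (D i2 (f k)) x y.
Proof. intros; symmetry; apply (clairaut U); auto. Qed.

Lemma s121 k x y : U x y -> D i1 (D i2 (D i1 (f k))) x y = D i1 (D i1 (D i2 (f k))) x y.
Proof.
  intro H. apply (D_ext i1 _ (D i1 (D i2 (f k)))).
  - eapply near_mono. apply (HU x y H). intros u v Huv. apply sym2; auto.
  - apply dlf2; auto.
Qed.
Lemma s221 k x y : U x y -> D i2 (D i2 (D i1 (f k))) x y = D i2 (D i1 (D i2 (f k))) x y.
Proof.
  intro H. apply (D_ext i2 _ (D i1 (D i2 (f k)))).
  - eapply near_mono. apply (HU x y H). intros u v Huv. apply sym2; auto.
  - apply dlf2; auto.
Qed.
Lemma s211 k x y : U x y -> D i2 (D i1 (D i1 (f k))) x y = D i1 (D i1 (D i2 (f k))) x y.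
Proof.
  intro H. rewrite <- (s121 k x y H). symmetry. apply (clairaut U); auto. apply smooth_D; auto.
Qed.
Lemma s212 k x y : U x y -> D i2 (D i1 (D i2 (f k))) x y = D i1 (D i2 (D i2 (f k))) x y.
Proof.
  intro H. symmetry. apply (clairaut U); auto. apply smooth_D; auto.
Qed.
Lemma s221' k x y : U x y -> D i2 (D i2 (D i1 (f k))) x y = D i1 (D i2 (D i2 (f k))) x y.
Proof. intro H. rewrite s221, s212; auto. Qed.



Definition dgv (c a b : ix) (x y : R) :=
  dot3 (fun k => D c (D a (f k)) x y) (fun k => D b (f k) x y) +
  dot3 (fun k => D a (f k) x y) (fun k => D c (D b (f k)) x y).

Lemma dl_metric a b c x y : U x y -> dl c (metric f a b) x y (dgv c a b x y).
Proof.
  intro H. unfold metric, dgv, dot3, sum3. eapply dl_eq.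
  repeat (first [dlstep | (first [ apply dlf2 | apply dlf1 | apply dlf0 ]; assumption)]).
  cbv beta. ring.
Qed.

Definition ddgv (c a b d : ix) (x y : R) :=
  dot3 (fun k => D c (D a (D b (f k))) x y) (fun k => D d (f k) x y) +
  dot3 (fun k => D a (D b (f k)) x y) (fun k => D c (D d (f k)) x y) +
  dot3 (fun k => D c (D b (f k)) x y) (fun k => D a (D d (f k)) x y) +
  dot3 (fun k => D b (f k) x y) (fun k => D c (D a (D d (f k))) x y).

Lemma dl_Dmetric a b d c x y : U x y -> dl c (D a (metric f b d)) x y (ddgv c a b d x y).
Proof.
  intro H. apply (dl_ext c _ (dgv a b d)).
  - eapply near_mono. apply (HU x y H). intros u v Huv. apply dl_D. apply dl_metric; auto.
  - unfold dgv, ddgv, dot3, sum3. eapply dl_eq.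
    repeat (first [dlstep | (first [ apply dlf2 | apply dlf1 | apply dlf0 ]; assumption)]).
    cbv beta. ring.
Qed.

End Surf.

Ltac dlj := first [ eapply dlf2 | eapply dlf1 | eapply dlf0 | eapply dl_metric | eapply dl_Dmetric ]; eassumption.
Ltac dlauto := repeat (first [dlstep | dlj]).


Ltac rw_dchr := match goal with
 | |- context [D ?c (chr ?f ?l ?j ?k) ?x ?y] =>
   let Hd := fresh in
   eassert (Hd : dl c (chr f l j k) x y _);
   [ cbv beta iota delta [chr sum2 ginv gdet]; dlauto; cbv beta; try assumption | rewrite (dl_D _ _ _ _ _ Hd); clear Hd ]
 end.

Definition hh (f : surf) (i j : ix) (x y : R) :=
  dot3 (fun k => D i (D j (f k)) x y) (fun k => normal_raw f k x y).

Lemma egregium U f (HU : open2 U) (HS : forall k, smooth_on U (f k)) x y :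
  U x y -> gdet f x y <> 0 ->
  gauss_curv f x y = (hh f i1 i1 x y * hh f i2 i2 x y - hh f i1 i2 x y ^ 2) / (gdet f x y * gdet f x y).
Proof.
  intros Hxy Hg.
  unfold gauss_curv, riem, sum2; cbv beta.
  do 4 rw_dchr.
  cbv beta iota delta [chr sum2 ginv].
  rewrite !(fun a b c => dl_D _ _ _ _ _ (dl_metric U f HS a b c x y Hxy)).
  unfold gdet in *. unfold hh, ddgv, dgv, metric, normal_raw, dot3, sum3, cross3 in *. cbv beta.
  rewrite ?(sym2 U f HU HS _ x y Hxy), ?(s121 U f HU HS _ x y Hxy), ?(s211 U f HU HS _ x y Hxy),
     ?(s212 U f HU HS _ x y Hxy), ?(s221' U f HU HS _ x y Hxy).
  Time field. exact Hg.
Qed.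

Section Pts.
Variable U : R -> R -> Prop.
Variable f : surf.
Hypothesis HU : open2 U.
Hypothesis HS : forall k, smooth_on U (f k).
Hypothesis HI : immersion_on U f.
Hypothesis HT : translating_soliton_on U f.

Definition NNv (u v : R) := dot3 (fun k => normal_raw f k u v) (fun k => normal_raw f k u v).

Lemma lagrange u v : gdet f u v = NNv u v.
Proof. unfold gdet, NNv, metric, normal_raw, dot3, sum3, cross3. ring. Qed.

Lemma NN_pos u v : U u v -> 0 < NNv u v.
Proof.
  intro H. pose proof (HI u v H) as Hn. unfold NNv, dot3, sum3.
  set (a := normal_raw f Defs.c1 u v) in *. set (b := normal_raw f c2 u v) in *.
  set (c := normal_raw f c3 u v) in *.
  assert (0 <= a*a) by nra. assert (0 <= b*b) by nra. assert (0 <= c*c) by nra.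
  destruct (Req_dec a 0) as [E1|E1]; [destruct (Req_dec b 0) as [E2|E2]; [destruct (Req_dec c 0) as [E3|E3]|]|].
  - exfalso. apply Hn. intros []; auto.
  - assert (0 < c*c) by (apply Rsqr_pos_lt; auto). lra.
  - assert (0 < b*b) by (apply Rsqr_pos_lt; auto). lra.
  - assert (0 < a*a) by (apply Rsqr_pos_lt; auto). lra.
Qed.

Lemma gdet_pos u v : U u v -> 0 < gdet f u v.
Proof. intro; rewrite lagrange; apply NN_pos; auto. Qed.

Definition dNv (c : ix) (k : i3) (u v : R) :=
  cross3 (fun m => D c (D i1 (f m)) u v) (fun m => D i2 (f m) u v) k +
  cross3 (fun m => D i1 (f m) u v) (fun m => D c (D i2 (f m)) u v) k.

Lemma dl_N c k u v : U u v -> dl c (normal_raw f k) u v (dNv c k u v).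
Proof.
  intro H. unfold normal_raw, dNv, cross3. destruct k; eapply dl_eq; dlauto; cbv beta; ring.
Qed.

Lemma dl_NN c u v : U u v ->
  dl c NNv u v (2 * dot3 (fun k => normal_raw f k u v) (fun k => dNv c k u v)).
Proof.
  intro H. unfold NNv, dot3, sum3. eapply dl_eq.
  repeat (first [apply dl_N; auto | apply dl_plus | apply dl_mult]).
  ring.
Qed.

Definition cv (c : ix) (u v : R) :=
  dNv c c3 u v - normal_raw f c3 u v * dot3 (fun k => normal_raw f k u v) (fun k => dNv c k u v) / gdet f u v.

Lemma dl_xi3 c u v : U u v -> dl c (unit_normal f c3) u v (cv c u v / sqrt (NNv u v)).
Proof.
  intro H. pose proof (NN_pos u v H) as Hp.
  assert (Hs : sqrt (NNv u v) <> 0) by (apply Rgt_not_eq, sqrt_lt_R0; auto).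
  eapply dl_eq. unfold unit_normal.
  apply dl_div. apply dl_N; auto. apply dl_sqrt. apply dl_NN; auto. exact Hp. exact Hs.
  cbv beta. change (dot3 (fun m => normal_raw f m u v) (fun m => normal_raw f m u v)) with (NNv u v).
  unfold cv. rewrite lagrange.
  pose proof (sqrt_sqrt (NNv u v) (Rlt_le _ _ Hp)) as Hss.
  set (s := sqrt (NNv u v)) in *. rewrite <- Hss. field. auto.
Qed.


Lemma s_pos u v : U u v -> 0 < sqrt (NNv u v).
Proof. intro H. apply sqrt_lt_R0, NN_pos; auto. Qed.

Definition Hh (u v : R) := - sum2 (fun i => sum2 (fun j => ginv f i j u v *
   dot3 (fun k => D i (D j (f k)) u v) (fun k => normal_raw f k u v))).

Lemma H_eq u v : U u v -> mean_curv f u v = Hh u v / sqrt (NNv u v).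
Proof.
  intro H. pose proof (s_pos u v H).
  unfold mean_curv, sff, unit_normal.
  change (dot3 (fun m => normal_raw f m u v) (fun m => normal_raw f m u v)) with (NNv u v).
  unfold Hh, sum2, dot3, sum3. field. lra.
Qed.

Lemma dl_H c u v : U u v -> dl c (mean_curv f) u v (- (cv c u v / sqrt (NNv u v))).
Proof.
  intro H. apply (dl_ext c _ (fun a b => - unit_normal f c3 a b)).
  - eapply near_mono. apply (HU u v H). intros a b Hab. apply HT; auto.
  - apply dl_opp. apply dl_xi3; auto.
Qed.

Lemma DH_eq c u v : U u v -> D c (mean_curv f) u v = - (cv c u v / sqrt (NNv u v)).
Proof. intro H. apply dl_D, dl_H; auto. Qed.

Definition Gn (i : ix) (u v : R) := sum2 (fun j => ginv f i j u v * - cv j u v).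
Definition phi (u v : R) := inner f (grad f (height f)) (grad f (height f)) u v.
Definition Wn (i : ix) (u v : R) := - (Gn i u v + Hh u v * grad f (height f) i u v) / phi u v.

Lemma W_eq i u v : U u v -> Wfield f i u v = Wn i u v / sqrt (NNv u v).
Proof.
  intro H. pose proof (s_pos u v H). unfold Wfield.
  assert (E : grad f (mean_curv f) i u v + mean_curv f u v * grad f (height f) i u v =
     (Gn i u v + Hh u v * grad f (height f) i u v) / sqrt (NNv u v)).
  { unfold grad at 1, Gn, sum2. rewrite !DH_eq, H_eq; auto. field. lra. }
  rewrite E. unfold Wn, phi. unfold Rdiv. ring.
Qed.

Definition rho (u v : R) := normal_raw f Defs.c1 u v * normal_raw f Defs.c1 u v + normal_raw f c2 u v * normal_raw f c2 u v.
Definition Sf (j : ix) (u v : R) :=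
  (normal_raw f Defs.c1 u v * dNv j c2 u v - normal_raw f c2 u v * dNv j Defs.c1 u v) / rho u v.

Lemma phi_rho u v : U u v -> phi u v * gdet f u v = rho u v.
Proof.
  intro H. pose proof (gdet_pos u v H).
  unfold phi, rho, inner, grad, height, ginv, sum2. unfold gdet in *.
  unfold metric, normal_raw, dot3, sum3, cross3 in *. field. lra.
Qed.

Lemma Wn_S u v : U u v -> rho u v <> 0 -> Wn i1 u v = Sf i2 u v /\ Wn i2 u v = - Sf i1 u v.
Proof.
  intros H Hr. pose proof (gdet_pos u v H) as Hg.
  assert (Hp : phi u v <> 0).
  { intro E. apply Hr. rewrite <- phi_rho, E; auto. ring. }
  unfold Wn, Sf, Gn, cv, Hh, rho in *.
  unfold phi in *. unfold grad, inner, height, ginv, sum2 in *. unfold gdet in *.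
  unfold dNv, metric, normal_raw, dot3, sum3, cross3 in *. 
  rewrite ?(sym2 U f HU HS _ u v H).
  split; field; repeat split; try assumption; try lra.
  all: match goal with |- ?P <> 0 => match type of Hg with 0 < ?G => match type of Hr with ?Rr <> 0 =>
      first [ replace P with (G * Rr) by ring | replace P with (G * G * Rr) by ring
            | replace P with (G * G * G * Rr) by ring ];
      repeat apply Rmult_integral_contrapositive_currified; try exact Hr; lra end end end.
Qed.

End Pts.

Section Div.
Variable U : R -> R -> Prop.
Variable f : surf.
Hypothesis HU : open2 U.
Hypothesis HS : forall k, smooth_on U (f k).
Hypothesis HI : immersion_on U f.
Hypothesis HT : translating_soliton_on U f.

Lemma cont1 k i x y : U x y -> Coquelicot.Continuity.continuity_2d_pt (D i (f k)) x y.
Proof. intro H. apply cont_conv. exact (proj2 (proj2 (HS k (cons i nil) x y H))). Qed.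

Lemma rho_near x y : U x y -> rho f x y <> 0 -> near x y (fun u v => rho f u v <> 0).
Proof.
  intros H Hr.
  assert (Hc : Coquelicot.Continuity.continuity_2d_pt (rho f) x y).
  { unfold rho, normal_raw, cross3.
    repeat first [ apply Coquelicot.Continuity.continuity_2d_pt_minus
                 | apply Coquelicot.Continuity.continuity_2d_pt_plus
                 | apply Coquelicot.Continuity.continuity_2d_pt_mult
                 | apply cont1; exact H ]. }
  destruct (Coquelicot.Continuity.continuity_2d_pt_neq_0 _ _ _ Hc Hr) as [d Hd].
  exists d. split. apply cond_pos. intros u v Hu Hv. apply Hd; auto.
Qed.

Definition Phi (i : ix) (u v : R) := sqrt (gdet f u v) * Wfield f i u v.

Lemma Phi_eq i u v : U u v -> Phi i u v = Wn f i u v.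
Proof.
  intro H. unfold Phi. rewrite (W_eq U f HU HS HI HT); auto. rewrite lagrange.
  pose proof (s_pos U f HI u v H). field. lra.
Qed.

Lemma divW_all x y : U x y -> rho f x y <> 0 ->
  exists a1 a2, dl i1 (Phi i1) x y a1 /\ dl i2 (Phi i2) x y a2 /\ a1 + a2 = 0.
Proof.
  intros H Hr.
  assert (Hn : near x y (fun u v => U u v /\ rho f u v <> 0)).
  { apply near_and. apply HU; auto. apply rho_near; auto. }
  eexists; eexists; split; [|split].
  - apply (dl_ext i1 _ (Sf f i2)).
    + eapply near_mono. exact Hn. intros u v [Huv Hr']. rewrite Phi_eq; auto.
      apply (Wn_S U f HU HS HI); auto.
    + unfold Sf, dNv, rho, normal_raw, cross3. dlauto. cbv beta. exact Hr.
  - apply (dl_ext i2 _ (fun u v => - Sf f i1 u v)).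
    + eapply near_mono. exact Hn. intros u v [Huv Hr']. rewrite Phi_eq; auto.
      apply (Wn_S U f HU HS HI); auto.
    + unfold Sf, dNv, rho, normal_raw, cross3. dlauto. cbv beta. exact Hr.
  - cbv beta. unfold rho, normal_raw, cross3 in *.
    rewrite ?(sym2 U f HU HS _ x y H), ?(s121 U f HU HS _ x y H), ?(s211 U f HU HS _ x y H),
     ?(s212 U f HU HS _ x y H), ?(s221' U f HU HS _ x y H).
    field. exact Hr.
Qed.

End Div.

Lemma posdef_lemma g11 g12 g22 a b : 0 <= g11 -> 0 < g11 * g22 - g12 ^ 2 ->
  g11 * a * a + g12 * a * b + g12 * b * a + g22 * b * b = 0 -> a = 0 /\ b = 0.
Proof.
  intros H1 H2 H3.
  assert (Hg : 0 < g11).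
  { destruct H1 as [H1|H1]; auto. subst g11. exfalso. pose proof (pow2_ge_0 g12).
    rewrite Rmult_0_l in H2. lra. }
  assert (E : g11 * (g11 * a * a + g12 * a * b + g12 * b * a + g22 * b * b) =
              (g11 * a + g12 * b) ^ 2 + (g11 * g22 - g12 ^ 2) * b ^ 2) by ring.
  rewrite H3, Rmult_0_r in E.
  pose proof (pow2_ge_0 (g11 * a + g12 * b)) as P1. pose proof (pow2_ge_0 b) as P2.
  assert (Hb2 : (g11 * g22 - g12 ^ 2) * b ^ 2 = 0) by nra.
  assert (Hb : b = 0).
  { apply Rmult_integral in Hb2. destruct Hb2 as [Hb2|Hb2]; [lra|]. apply Rsqr_0_uniq. unfold Rsqr. replace (b*b) with (b^2) by ring. exact Hb2. }
  subst b. split; auto.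
  assert (Ha : g11 * a = 0) by (apply Rsqr_0_uniq; unfold Rsqr; nra).
  apply Rmult_integral in Ha. destruct Ha; lra.
Qed.

Section Final.
Variable U : R -> R -> Prop.
Variable f : surf.
Hypothesis HU : open2 U.
Hypothesis HS : forall k, smooth_on U (f k).
Hypothesis HI : immersion_on U f.
Hypothesis HT : translating_soliton_on U f.

Lemma phi_nz x y : U x y ->
  ~ (grad f (height f) i1 x y = 0 /\ grad f (height f) i2 x y = 0) -> phi f x y <> 0.
Proof.
  intros H Hgu E. apply Hgu. pose proof (gdet_pos U f HI x y H) as Hg.
  unfold phi, inner, sum2 in E. unfold gdet in Hg.
  assert (Hm : metric f i2 i1 x y = metric f i1 i2 x y) by (unfold metric, dot3, sum3; ring).
  rewrite Hm in E.
  apply (posdef_lemma (metric f i1 i1 x y) (metric f i1 i2 x y) (metric f i2 i2 x y)); auto.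
  - unfold metric, dot3, sum3. nra.
  - rewrite <- E. ring.
Qed.

Lemma gradH_eq i x y : U x y -> grad f (mean_curv f) i x y = Gn f i x y / sqrt (NNv f x y).
Proof.
  intro H. pose proof (s_pos U f HI x y H). unfold grad, Gn, sum2.
  rewrite !(DH_eq U f HU HS HI HT); auto. field. lra.
Qed.

Lemma inner_scale (X Y : vfield) X' Y' s x y : s <> 0 ->
  (forall i, X i x y = X' i / s) -> (forall i, Y i x y = Y' i / s) ->
  inner f X Y x y = sum2 (fun i => sum2 (fun j => metric f i j x y * X' i * Y' j)) / (s * s).
Proof.
  intros Hs HX HY. unfold inner, sum2. rewrite !HX, !HY. field. auto.
Qed.

Lemma goal3 x y : U x y -> phi f x y <> 0 ->
  gauss_curv f x y = inner f (grad f (mean_curv f)) (Wfield f) x y.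
Proof.
  intros H Hp. pose proof (s_pos U f HI x y H) as Hs. pose proof (gdet_pos U f HI x y H) as Hg.
  pose proof (phi_rho U f HI x y H) as Hpr.
  assert (Hr : rho f x y <> 0).
  { rewrite <- Hpr. apply Rmult_integral_contrapositive_currified; lra. }
  rewrite (egregium U f HU HS x y H); [|lra].
  rewrite (inner_scale _ _ (fun i => Gn f i x y) (fun i => Wn f i x y) (sqrt (NNv f x y))); [|lra| |].
  2: intro; apply gradH_eq; auto.
  2: intro; apply (W_eq U f HU HS HI HT); auto.
  rewrite sqrt_sqrt; [|apply Rlt_le, (NN_pos U f HI); auto]. rewrite <- lagrange.
  clear Hpr Hs.
  unfold Wn, Gn, cv, Hh, rho, hh in *.
  unfold phi in *. unfold grad, inner, height, ginv, sum2 in *. unfold gdet in *.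
  unfold dNv, metric, normal_raw, dot3, sum3, cross3 in *.
  rewrite ?(sym2 U f HU HS _ x y H).
  field; repeat split; try assumption; try lra.
  all: match goal with |- ?P <> 0 => match type of Hg with 0 < ?G => match type of Hr with ?Rr <> 0 =>
      first [ replace P with (G * Rr) by ring | replace P with (G * G * Rr) by ring
            | replace P with (G * G * G * Rr) by ring ];
      repeat apply Rmult_integral_contrapositive_currified; try exact Hr; lra end end end.
Qed.


Lemma dexpH j x y : U x y ->
  D j (fun x' y' => exp (height f x' y') * mean_curv f x' y') x y =
  exp (height f x y) * D j (f c3) x y * mean_curv f x y + exp (height f x y) * D j (mean_curv f) x y.
Proof.
  intro H. apply dl_D. eapply dl_eq. apply dl_mult. apply dl_exp. unfold height. eapply dlf0; eauto.
  apply (dl_H U f HU HS HI HT); auto. rewrite (DH_eq U f HU HS HI HT _ x y H). cbv beta. ring.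
Qed.

Lemma goal1 x y : U x y -> phi f x y <> 0 ->
  forall i, Wfield f i x y =
        - grad f (fun x' y' => exp (height f x' y') * mean_curv f x' y') i x y
        / (exp (height f x y) * inner f (grad f (height f)) (grad f (height f)) x y).
Proof.
  intros H Hp i. pose proof (exp_pos (height f x y)).
  unfold Wfield, grad, sum2. rewrite !dexpH; auto.
  unfold phi in Hp. unfold grad, sum2. unfold height in *.
  field; repeat split; try assumption; try lra.
Qed.

Lemma Rho_nz x y : U x y -> phi f x y <> 0 -> rho f x y <> 0.
Proof.
  intros H Hp. pose proof (gdet_pos U f HI x y H). rewrite <- (phi_rho U f HI x y H).
  apply Rmult_integral_contrapositive_currified; lra.
Qed.

Lemma goal2 x y : U x y -> phi f x y <> 0 -> div f (Wfield f) x y = 0.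
Proof.
  intros H Hp. destruct (divW_all U f HU HS HI HT x y H (Rho_nz x y H Hp)) as [a1 [a2 [H1 [H2 H12]]]].
  unfold div, sum2.
  assert (E1 : D i1 (fun x' y' => sqrt (gdet f x' y') * Wfield f i1 x' y') x y = a1) by (apply dl_D; exact H1).
  assert (E2 : D i2 (fun x' y' => sqrt (gdet f x' y') * Wfield f i2 x' y') x y = a2) by (apply dl_D; exact H2).
  rewrite E1, E2, H12. ring.
Qed.

Lemma goal4 x y : U x y -> phi f x y <> 0 ->
  gauss_curv f x y = div f (scal (mean_curv f) (Wfield f)) x y.
Proof.
  intros H Hp. rewrite goal3; auto.
  destruct (divW_all U f HU HS HI HT x y H (Rho_nz x y H Hp)) as [a1 [a2 [H1 [H2 H12]]]].
  assert (E : forall i a, dl i (Phi f i) x y a ->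
     D i (fun x' y' => sqrt (gdet f x' y') * scal (mean_curv f) (Wfield f) i x' y') x y =
     - (cv f i x y / sqrt (NNv f x y)) * Phi f i x y + mean_curv f x y * a).
  { intros i a Ha. apply dl_D.
    apply (dl_fext i (fun u v => mean_curv f u v * Phi f i u v)).
    { intros u v. unfold Phi, scal. ring. }
    apply dl_mult; auto. apply (dl_H U f HU HS HI HT); auto. }
  unfold div, sum2. rewrite (E i1 a1 H1), (E i2 a2 H2).
  replace a2 with (- a1) by lra.
  pose proof (s_pos U f HI x y H) as Hs. pose proof (gdet_pos U f HI x y H) as Hg.
  unfold Phi. rewrite !lagrange.
  unfold inner, grad, sum2, ginv. rewrite !(DH_eq U f HU HS HI HT); auto.
  assert (Hm : metric f i2 i1 x y = metric f i1 i2 x y) by (unfold metric, dot3, sum3; ring).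
  rewrite Hm. unfold gdet in *.
  field. split; lra.
Qed.

End Final.

Theorem corollary4p6 (U : R -> R -> Prop) (f : surf) :
  open2 U ->
  (forall k, smooth_on U (f k)) ->
  immersion_on U f ->
  translating_soliton_on U f ->
  forall x y, U x y ->
    ~ (grad f (height f) i1 x y = 0 /\ grad f (height f) i2 x y = 0) ->
    (forall i, Wfield f i x y =
        - grad f (fun x' y' => exp (height f x' y') * mean_curv f x' y') i x y
        / (exp (height f x y) *
           inner f (grad f (height f)) (grad f (height f)) x y)) /\
    div f (Wfield f) x y = 0 /\
    gauss_curv f x y = inner f (grad f (mean_curv f)) (Wfield f) x y /\
    gauss_curv f x y = div f (scal (mean_curv f) (Wfield f)) x y.
Proof.
  intros HU HS HI HT x y H Hgu.
  pose proof (phi_nz U f HI x y H Hgu) as Hp.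
  split; [|split; [|split]].
  - apply (goal1 U f HU HS HI HT); auto.
  - apply (goal2 U f HU HS HI HT); auto.
  - apply (goal3 U f HU HS HI HT); auto.
  - apply (goal4 U f HU HS HI HT); auto.
Qed.
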